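(* Let $P$ be a poset with an $\mathbb{R}$-action $\Lambda$. Let $I,J$ be intervals of $P$ and $\epsilon\ge0$ with $I\subseteq\mathrm{Ex}^\Lambda_\epsilon(J)$ and $J\subseteq\mathrm{Ex}^\Lambda_\epsilon(I)$. Then $$I\cap\Lambda_{-\epsilon}(J)\cap\Lambda_{-2\epsilon}(I)=I\cap\Lambda_{-2\epsilon}(I)$$ and $$J\cap\Lambda_{-\epsilon}(I)\cap\Lambda_{-2\epsilon}(J)=J\cap\Lambda_{-2\epsilon}(J).$$
   Context: An interval of a poset $P$ is a nonempty convex and connected subset (convex: $p,q\in I$, $p\le r\le q$ imply $r\in I$; connected: any two elements are joined by a finite sequence in $I$ with consecutive ones comparable). For $A\subseteq P$ nonempty, $A^\uparrow=\{p:\exists a\in A,\ a\le p\}$ and $A^\downarrow=\{p:\exists a\in A,\ p\le a\}$; $\emptyset^\uparrow=\emptyset^\downarrow=P$. An $\mathbb{R}$-action on $P$ is a family $\{\Lambda_\epsilon\}_{\epsilon\ge0}$ of poset automorphisms with $p\le\Lambda_\epsilon(p)$, $\Lambda_0=\mathrm{id}$ and $\Lambda_\epsilon\Lambda_\zeta=\Lambda_{\epsilon+\zeta}$. Write $\Lambda_{-\epsilon}=\Lambda_\epsilon^{-1}$; $\Lambda_{-\epsilon}(J)$ denotes the image. $\mathrm{Ex}^\Lambda_\epsilon(A)=\Lambda_\epsilon^{-1}(A)^\uparrow\cap\Lambda_\epsilon(A)^\downarrow$, with $\Lambda_\epsilon^{-1}(A)$ the preimage. *)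

(* Defs.v *)
From HB Require Import structures.
From mathcomp Require Import all_boot all_order all_algebra.
From mathcomp Require Import boolp classical_sets reals.
Set Implicit Arguments. Unset Strict Implicit. Unset Printing Implicit Defensive.
Import Order.TTheory GRing.Theory Num.Theory.
Local Open Scope classical_set_scope.
Local Open Scope ring_scope.

Section Defs.
Context {d : Order.disp_t} {P : porderType d}.

Definition convex_set (I : set P) : Prop :=
  forall p q r, I p -> I q -> (p <= r)%O -> (r <= q)%O -> I r.

Definition connected_set (I : set P) : Prop :=
  forall p q, I p -> I q ->
    exists (n : nat) (f : nat -> P),
      [/\ f 0%N = p, f n = q,
          (forall i, (i <= n)%N -> I (f i)) &
          (forall i, (i < n)%N -> (f i >=< f i.+1)%O)].

Definition is_interval (I : set P) : Prop :=
  I !=set0 /\ convex_set I /\ connected_set I.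

(* upsets / downsets, with the convention that the empty set gives all of P *)
Definition upset (A : set P) : set P :=
  if pselect (A = set0) is left _ then setT
  else [set p | exists2 a, A a & (a <= p)%O].

Definition downset (A : set P) : set P :=
  if pselect (A = set0) is left _ then setT
  else [set p | exists2 a, A a & (p <= a)%O].

Definition poset_automorphism (f : P -> P) : Prop :=
  bijective f /\ forall x y, (f x <= f y)%O = (x <= y)%O.

(* R-action: a family Lam e (used only for e >= 0) *)
Definition is_Raction (R : realType) (Lam : R -> P -> P) : Prop :=
  [/\ forall e, 0 <= e -> poset_automorphism (Lam e),
      forall e p, 0 <= e -> (p <= Lam e p)%O,
      Lam 0 = id &
      forall e z, 0 <= e -> 0 <= z -> Lam e \o Lam z = Lam (e + z)].

(* Lambda_{-e}(J): image of J under the inverse automorphism of Lam e,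
   i.e. the preimage of J under the bijection Lam e *)
Definition Lam_neg (R : realType) (Lam : R -> P -> P) (e : R) (J : set P) : set P :=
  Lam e @^-1` J.

Definition Ex (R : realType) (Lam : R -> P -> P) (e : R) (A : set P) : set P :=
  upset (Lam e @^-1` A) `&` downset (Lam e @` A).

End Defs.

(* Main.v *)
Require Import Defs.
From HB Require Import structures.
From mathcomp Require Import all_boot all_order all_algebra.
From mathcomp Require Import boolp classical_sets reals.
Import Order.TTheory GRing.Theory Num.Theory.
Local Open Scope classical_set_scope.
Local Open Scope ring_scope.

Lemma half (R : realType) (d : Order.disp_t) (P : porderType d)
  (Lam : R -> P -> P) (I J : set P) (e : R) :
  is_Raction Lam -> is_interval J -> 0 <= e ->
  I `<=` Ex Lam e J ->
  I `&` Lam_neg Lam e J `&` Lam_neg Lam (2 * e) I = I `&` Lam_neg Lam (2 * e) I.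
Proof.
move=> [Haut Hle H0 Hcomp] [[j0 Jj0] [Jconv _]] e0 IEx.
have [[g Hfg Hgf] Hmon] := Haut e e0.
have H2 : forall x, Lam (2 * e) x = Lam e (Lam e x).
  by move=> x; rewrite mulr2n mulrDl mul1r -(Hcomp e e e0 e0).
apply/seteqP; split => x /=; first by case=> [[]].
move=> [Ix L2x]; split; [split|] => //.
rewrite /Lam_neg /= in L2x *.
have [Hup Hdown] := IEx x Ix.
have [Hup' Hdown'] := IEx _ L2x.
rewrite /upset in Hup; rewrite /downset in Hdown'.
case: pselect Hup => [E|_] Hup.
  exfalso; have : (Lam e @^-1` J) (g j0) by rewrite /= Hgf.
  by rewrite E.
case: pselect Hdown' => [E|_] Hdown'.
  exfalso; have : (Lam e @` J) (Lam e j0) by exists j0.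
  by rewrite E.
case: Hup => a /= Ja ax.
case: Hdown' => b [j Jj <-]; rewrite H2 Hmon => Hj.
apply: (Jconv _ _ _ Ja Jj) => //.
by rewrite Hmon.
Qed.

Theorem lemma2p16 (R : realType) (d : Order.disp_t) (P : porderType d)
  (Lam : R -> P -> P) (I J : set P) (e : R) :
  is_Raction Lam -> is_interval I -> is_interval J -> 0 <= e ->
  I `<=` Ex Lam e J -> J `<=` Ex Lam e I ->
  (I `&` Lam_neg Lam e J `&` Lam_neg Lam (2 * e) I = I `&` Lam_neg Lam (2 * e) I) /\
  (J `&` Lam_neg Lam e I `&` Lam_neg Lam (2 * e) J = J `&` Lam_neg Lam (2 * e) J).
Proof.
move=> HR HI HJ e0 H1 H2; split; exact: half.
Qed.
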